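(* Let $F$ be an Archimedean vector lattice and $(f_{\alpha})_{\alpha\in A}\subset F_{+}$ a net. The following are equivalent: (i) $f_{\alpha}\xrightarrow{uo}0_{F}$; (ii) if $h\in F_{+}$ is such that $\bigvee_{\alpha\ge\alpha_{0}}h\wedge f_{\alpha}=h$ for every $\alpha_{0}\in A$, then $h=0_{F}$; (iii) for every $h>0_{F}$ there are $e\in(0_{F},h]$ and $\alpha_{0}$ such that $(f_{\alpha}-h)^{+}\perp e$ for every $\alpha\ge\alpha_{0}$. Moreover, if $F$ has the principal projection property, these conditions are equivalent to: (iv) for every $h>0_{F}$ there are a nonzero component $e$ of $h$ and $\alpha_{0}$ such that $P_{e}f_{\alpha}\le e$ for every $\alpha\ge\alpha_{0}$.
   Context: A net order converges to $f$ if there is $G$ with $\bigwedge G=0$ such that for each $g\in G$ the net is eventually in $[f-g,f+g]$; it uo-converges to $f$ if $|f_\alpha-f|\wedge g$ order converges to $0$ for every $g\ge0$. $x\perp y$ means $|x|\wedge|y|=0$. $F$ has the principal projection property (PPP) if for every $e\in F$ the band $\{e\}^{dd}$ is a projection band, i.e. $F=\{e\}^{dd}+\{e\}^{d}$; $P_e$ denotes the corresponding band projection onto $\{e\}^{dd}$. An element $e$ is a component of $h$ if $e\perp h-e$. *)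

(* Defs.v *)
From HB Require Import structures.
From mathcomp Require Import all_boot all_order all_algebra.
From mathcomp Require Import reals.
From Stdlib Require Import ClassicalEpsilon.
Set Implicit Arguments. Unset Strict Implicit. Unset Printing Implicit Defensive.
Import Order.TTheory GRing.Theory Num.Theory.
Local Open Scope ring_scope.

Record vector_lattice (R : realType) := VectorLattice {
  vl_space :> lmodType R;
  vl_le : vl_space -> vl_space -> Prop;
  vl_join : vl_space -> vl_space -> vl_space;
  vl_le_refl : forall x, vl_le x x;
  vl_le_trans : forall x y z, vl_le x y -> vl_le y z -> vl_le x z;
  vl_le_anti : forall x y, vl_le x y -> vl_le y x -> x = y;
  vl_le_add : forall x y z, vl_le x y -> vl_le (x + z) (y + z);
  vl_le_scale : forall (a : R) x y, 0 <= a -> vl_le x y -> vl_le (a *: x) (a *: y);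
  vl_join_ub1 : forall x y, vl_le x (vl_join x y);
  vl_join_ub2 : forall x y, vl_le y (vl_join x y);
  vl_join_lub : forall x y z, vl_le x z -> vl_le y z -> vl_le (vl_join x y) z
}.

Section VL.
Variables (R : realType) (F : vector_lattice R).

Definition vle (x y : F) : Prop := vl_le x y.
Definition vlt (x y : F) : Prop := vle x y /\ x <> y.
Definition vjoin (x y : F) : F := vl_join x y.
Definition vmeet (x y : F) : F := - vjoin (- x) (- y).
Definition vabs (x : F) : F := vjoin x (- x).
Definition vpos (x : F) : F := vjoin x 0.

Definition vdisjoint (x y : F) : Prop := vmeet (vabs x) (vabs y) = 0.

Definition archimedean : Prop :=
  forall x y : F, vle 0 x -> vle 0 y -> (forall n : nat, vle (x *+ n) y) -> x = 0.

Definition is_sup (S : F -> Prop) (s : F) : Prop :=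
  (forall x, S x -> vle x s) /\ (forall u, (forall x, S x -> vle x u) -> vle s u).
Definition is_inf (S : F -> Prop) (s : F) : Prop :=
  (forall x, S x -> vle s x) /\ (forall u, (forall x, S x -> vle u x) -> vle u s).

Definition disj_comp (e : F) : F -> Prop := fun x => vdisjoint x e.
Definition band_gen (e : F) : F -> Prop :=
  fun x => forall y, disj_comp e y -> vdisjoint x y.

Definition PPP : Prop :=
  forall e x : F, exists y z, band_gen e y /\ disj_comp e z /\ x = y + z.

(* band projection P_e onto {e}^dd (meaningful under PPP, where the
   decomposition exists and is unique) *)
Definition band_proj (e x : F) : F :=
  epsilon (inhabits (0 : F)) (fun y => band_gen e y /\ disj_comp e (x - y)).

Definition component (e h : F) : Prop := vdisjoint e (h - e).
End VL.

Record directed_set := DirectedSet {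
  ds_car :> Type;
  ds_le : ds_car -> ds_car -> Prop;
  ds_refl : forall a, ds_le a a;
  ds_trans : forall a b c, ds_le a b -> ds_le b c -> ds_le a c;
  ds_up : forall a b, exists c, ds_le a c /\ ds_le b c;
  ds_inhabited : inhabited ds_car
}.

Section Conv.
Variables (R : realType) (F : vector_lattice R) (A : directed_set).

Definition order_conv (f : A -> F) (l : F) : Prop :=
  exists G : F -> Prop, is_inf G 0 /\
    forall g, G g -> exists a0 : A, forall a, ds_le a0 a ->
      vle (l - g) (f a) /\ vle (f a) (l + g).

Definition uo_conv (f : A -> F) (l : F) : Prop :=
  forall g : F, vle 0 g -> order_conv (fun a => vmeet (vabs (f a - l)) g) 0.
End Conv.

(* Main.v *)
Require Import Defs.
From mathcomp Require Import all_boot all_order all_algebra.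
From mathcomp Require Import reals.
From mathcomp Require Import lra.
From Stdlib Require Import ClassicalEpsilon Classical.
Set Implicit Arguments. Unset Strict Implicit.
Import Order.TTheory GRing.Theory Num.Theory.
Local Open Scope ring_scope.

Section Lat.
Variables (R : realType) (F : vector_lattice R).
Implicit Types x y z a b c d u v w : F.

Lemma le_rf x : vle x x. Proof. exact: vl_le_refl. Qed.
Lemma le_tr x y z : vle x y -> vle y z -> vle x z. Proof. exact: vl_le_trans. Qed.
Lemma le_an x y : vle x y -> vle y x -> x = y. Proof. exact: vl_le_anti. Qed.
Lemma leDr x y z : vle x y -> vle (x + z) (y + z). Proof. exact: vl_le_add. Qed.
Lemma leDl x y z : vle x y -> vle (z + x) (z + y).
Proof. by move=> h; rewrite ![z + _]addrC; apply: leDr. Qed.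
Lemma leD a b c d : vle a b -> vle c d -> vle (a + c) (b + d).
Proof. move=> h1 h2; apply: le_tr (leDr c h1) _; exact: leDl. Qed.
Lemma leN x y : vle x y -> vle (- y) (- x).
Proof.
move=> h; have := leDr (- x - y) h.
by rewrite addrA subrr add0r addrCA subrr addr0.
Qed.
Lemma leNK x y : vle (- y) (- x) -> vle x y.
Proof. by move/leN; rewrite !opprK. Qed.
Lemma subge0 x y : vle x y -> vle 0 (y - x).
Proof. by move=> h; have := leDr (- x) h; rewrite subrr. Qed.
Lemma subge0K x y : vle 0 (y - x) -> vle x y.
Proof. by move=> h; have := leDr x h; rewrite add0r subrK. Qed.
Lemma lesub x y z : vle (x + z) y -> vle x (y - z).
Proof. by move=> h; have := leDr (- z) h; rewrite addrK. Qed.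
Lemma lesubK x y z : vle x (y - z) -> vle (x + z) y.
Proof. by move=> h; have := leDr z h; rewrite subrK. Qed.
Lemma le_addr x y : vle 0 y -> vle x (x + y).
Proof. by move=> h; have := leDl x h; rewrite addr0. Qed.
Lemma subleK x y z : vle x (y + z) -> vle (x - z) y.
Proof. by move=> h; have := leDr (- z) h; rewrite addrK. Qed.
Lemma le_subr x y : vle 0 y -> vle (x - y) x.
Proof. by move=> h; apply: subleK; apply: le_addr. Qed.

Lemma j1 x y : vle x (vjoin x y). Proof. exact: vl_join_ub1. Qed.
Lemma j2 x y : vle y (vjoin x y). Proof. exact: vl_join_ub2. Qed.
Lemma jl x y z : vle x z -> vle y z -> vle (vjoin x y) z. Proof. exact: vl_join_lub. Qed.
Lemma joinC x y : vjoin x y = vjoin y x.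
Proof. by apply: le_an; apply: jl; [apply: j2|apply: j1|apply: j2|apply: j1]. Qed.
Lemma join_mono a b c d : vle a b -> vle c d -> vle (vjoin a c) (vjoin b d).
Proof. move=> h1 h2; apply: jl; [exact: le_tr h1 (j1 _ _)|exact: le_tr h2 (j2 _ _)]. Qed.
Lemma joinDr a b c : vjoin a b + c = vjoin (a + c) (b + c).
Proof.
apply: le_an.
  apply: lesubK; apply: jl; apply: lesub; [exact: j1|exact: j2].
by apply: jl; apply: leDr; [exact: j1|exact: j2].
Qed.
Lemma join_l x y : vle y x -> vjoin x y = x.
Proof. by move=> h; apply: le_an; [apply: jl => //; apply: le_rf|apply: j1]. Qed.

Lemma m1 x y : vle (vmeet x y) x.
Proof. by apply: leNK; rewrite /vmeet opprK; apply: j1. Qed.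
Lemma m2 x y : vle (vmeet x y) y.
Proof. by apply: leNK; rewrite /vmeet opprK; apply: j2. Qed.
Lemma mg x y z : vle z x -> vle z y -> vle z (vmeet x y).
Proof.
move=> h1 h2; apply: leNK; rewrite /vmeet opprK; apply: jl; exact: leN.
Qed.
Lemma meetC x y : vmeet x y = vmeet y x.
Proof. by rewrite /vmeet joinC. Qed.
Lemma meet_mono a b c d : vle a b -> vle c d -> vle (vmeet a c) (vmeet b d).
Proof. move=> h1 h2; apply: mg; [exact: le_tr (m1 _ _) h1|exact: le_tr (m2 _ _) h2]. Qed.
Lemma meetDr a b c : vmeet a b + c = vmeet (a + c) (b + c).
Proof.
by rewrite /vmeet; apply: oppr_inj; rewrite !opprD !opprK joinDr.
Qed.
Lemma meet_l x y : vle x y -> vmeet x y = x.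
Proof. by move=> h; apply: le_an; [apply: m1|apply: mg => //; apply: le_rf]. Qed.
Lemma meet_ge0 x y : vle 0 x -> vle 0 y -> vle 0 (vmeet x y).
Proof. exact: mg. Qed.
Lemma oppr_meet a b : - vmeet a b = vjoin (- a) (- b).
Proof. by rewrite /vmeet opprK. Qed.
Lemma join_meet a b : vjoin a b + vmeet a b = a + b.
Proof.
have e : vjoin a b + (- a - b) = vjoin (- a) (- b).
  rewrite joinDr joinC; congr vjoin; [by rewrite addrCA subrr addr0 | by rewrite addrA subrr add0r].
by rewrite /vmeet -e opprD addrA subrr add0r opprD !opprK.
Qed.


Lemma lesubl x y z : vle (x - z) y -> vle x (z + y).
Proof. by move=> h; have := leDr z h; rewrite subrK addrC. Qed.
Lemma leNl x y z : vle y (x + z) -> vle (- x + y) z.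
Proof. by move=> h; have := leDl (- x) h; rewrite addKr. Qed.
Lemma leN0 x y : vle y x -> vle (- x + y) 0.
Proof. by move=> h; have := leDl (- x) h; rewrite addNr. Qed.
Lemma leN0' x : vle 0 x -> vle (- x) 0.
Proof. by move=> h; have := leN h; rewrite oppr0. Qed.

Lemma pos_ge0 x : vle 0 (vpos x). Proof. exact: j2. Qed.
Lemma le_pos x : vle x (vpos x). Proof. exact: j1. Qed.
Lemma pos_id x : vle 0 x -> vpos x = x. Proof. exact: join_l. Qed.
Lemma pos_mono x y : vle x y -> vle (vpos x) (vpos y).
Proof. by move=> h; apply: join_mono => //; apply: le_rf. Qed.
Lemma posB x y : vpos (x - y) = x - vmeet x y.
Proof.
by rewrite /vpos /vmeet opprK [RHS]addrC joinDr addNr joinC [- y + x]addrC.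
Qed.
Lemma posE x : vpos x - vpos (- x) = x.
Proof. by have := join_meet x 0; rewrite addr0 /vmeet oppr0. Qed.
Lemma pos_neg x : vmeet (vpos x) (vpos (- x)) = 0.
Proof.
have h := meetDr (vpos x) (vpos (- x)) (- vpos (- x)).
apply: (addIr (- vpos (- x))); rewrite add0r h posE subrr /vmeet oppr0.
by [].
Qed.

Lemma abs_ge x : vle x (vabs x). Proof. exact: j1. Qed.
Lemma abs_geN x : vle (- x) (vabs x). Proof. exact: j2. Qed.
Lemma abs_id x : vle 0 x -> vabs x = x.
Proof. move=> h; apply: join_l; exact: le_tr (leN0' h) h. Qed.
Lemma absN x : vabs (- x) = vabs x.
Proof. by rewrite /vabs opprK joinC. Qed.
Lemma abs_ge0 x : vle 0 (vabs x).
Proof.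
have h : vle 0 (vabs x + vabs x).
  by have := leD (abs_ge x) (abs_geN x); rewrite subrr.
have h2 := vl_le_scale (_ : 0 <= (2^-1 : R)) h.
have e : (2^-1 : R) *: (vabs x + vabs x) = vabs x.
  rewrite -{1 2}(scale1r (vabs x)) -scalerDl scalerA.
  have -> : (2^-1 * (1 + 1) : R) = 1 by lra.
  by rewrite scale1r.
by move: h2; rewrite scaler0 e; apply; lra.
Qed.
Lemma abs_tri x y : vle (vabs (x + y)) (vabs x + vabs y).
Proof.
apply: jl; first exact: leD (abs_ge x) (abs_ge y).
by rewrite opprD; apply: leD (abs_geN x) (abs_geN y).
Qed.
Lemma pos_le_abs x : vle (vpos x) (vabs x).
Proof. apply: jl; [exact: abs_ge|exact: abs_ge0]. Qed.

Lemma disjC x y : vdisjoint x y -> vdisjoint y x.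
Proof. by rewrite /vdisjoint meetC. Qed.
Lemma disj_nn x y : vle 0 x -> vle 0 y -> vdisjoint x y <-> vmeet x y = 0.
Proof. by move=> hx hy; rewrite /vdisjoint !abs_id. Qed.
Lemma disj_self x : vdisjoint x x -> x = 0.
Proof.
rewrite /vdisjoint meet_l; last exact: le_rf.
move=> h; apply: le_an; first by rewrite -h; apply: abs_ge.
by apply: leNK; rewrite oppr0 -h; apply: abs_geN.
Qed.
Lemma subadd a b c : vle 0 a -> vle 0 b -> vle 0 c ->
  vle (vmeet (a + b) c) (vmeet a c + vmeet b c).
Proof.
move=> ha hb hc; set u := vmeet (a + b) c.
apply: lesubl; rewrite oppr_meet addrC joinDr.
have hu1 : vle u (a + b) by apply: m1.
have hu2 : vle u c by apply: m2.
apply: mg; apply: jl.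
- exact: leNl.
- exact: le_tr (leN0 hu2) hb.
- apply: leNl; apply: le_tr hu2 _; rewrite addrC; exact: le_addr.
- exact: le_tr (leN0 hu2) hc.
Qed.
Lemma disj_le x y z : vle (vabs x) (vabs y) -> vdisjoint y z -> vdisjoint x z.
Proof.
rewrite /vdisjoint => h1 h2; apply: le_an.
  by rewrite -h2; apply: meet_mono => //; apply: le_rf.
by apply: meet_ge0; apply: abs_ge0.
Qed.
Lemma disjD x y z : vdisjoint x z -> vdisjoint y z -> vdisjoint (x + y) z.
Proof.
rewrite /vdisjoint => h1 h2; apply: le_an.
  apply: le_tr (meet_mono (abs_tri x y) (le_rf (vabs z))) _.
  rewrite -[0 : F](addr0 0) -{1}h1 -{1}h2.
  by apply: subadd; apply: abs_ge0.
by apply: meet_ge0; apply: abs_ge0.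
Qed.
Lemma disjN x z : vdisjoint x z -> vdisjoint (- x) z.
Proof. by rewrite /vdisjoint absN. Qed.
Lemma disj_nn_le x y z : vle 0 x -> vle x y -> vdisjoint y z -> vdisjoint x z.
Proof.
move=> h0 h1; apply: disj_le; rewrite (abs_id h0) (abs_id (le_tr h0 h1)) //.
Qed.
Lemma comp_nn (h e r : F) : vle 0 h -> h = e + r -> vdisjoint e r -> vle 0 e.
Proof.
move=> h0 he hd.
have q0 : vpos (- e) = 0.
  apply: le_an; last exact: pos_ge0.
  rewrite -hd; apply: mg; first by rewrite -(absN e); apply: pos_le_abs.
  apply: le_tr (pos_le_abs r); apply: pos_mono.
  have := leDr (- e) h0; rewrite add0r he addrC addKr //.
by rewrite -(posE e) q0 subr0; apply: pos_ge0.
Qed.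

End Lat.
Section Main.
Variables (R : realType) (F : vector_lattice R) (A : directed_set) (f : A -> F).
Hypothesis Hpos : forall a, vle 0 (f a).

Definition cii := forall h : F, vle 0 h ->
      (forall a0 : A, is_sup (fun x => exists a, ds_le a0 a /\ x = vmeet h (f a)) h) ->
      h = 0.

Lemma disj_abs (x z : F) : vdisjoint x z -> vdisjoint (vabs x) z.
Proof. by rewrite /vdisjoint (abs_id (abs_ge0 x)). Qed.

Lemma add_ge0 (a b : F) : vle 0 a -> vle 0 b -> vle 0 (a + b).
Proof. by move=> ha hb; have := leD ha hb; rewrite addr0. Qed.

Lemma extract (h : F) : cii -> vle 0 h -> h <> 0 ->
  exists a0 (d : F), [/\ vle 0 d, vle d h, d <> 0 &
    forall a, ds_le a0 a -> vle (vmeet h (f a) + d) h].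
Proof.
move=> Hii h0 hne.
have : ~ (forall a0 : A, is_sup (fun x => exists a, ds_le a0 a /\ x = vmeet h (f a)) h).
  by move=> H; apply: hne; apply: Hii.
move/not_all_ex_not => [a0 Hns].
have ub : forall x, (exists a, ds_le a0 a /\ x = vmeet h (f a)) -> vle x h.
  by move=> x [a [_ ->]]; apply: m1.
have : ~ forall u, (forall x, (exists a, ds_le a0 a /\ x = vmeet h (f a)) -> vle x u) -> vle h u.
  by move=> H; apply: Hns; split.
move/not_all_ex_not => [u Hu0]; have [Hu Hnu] := imply_to_and _ _ Hu0.
have Hm : forall a, ds_le a0 a -> vle (vmeet h (f a)) (vmeet h u).
  move=> a ha; apply: mg; first exact: m1.
  by apply: Hu; exists a.
exists a0, (h - vmeet h u); split.
- exact: subge0 (m1 _ _).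
- apply: le_subr; apply: le_tr (Hm a0 (ds_refl a0)).
  exact: meet_ge0.
- move/eqP; rewrite subr_eq0 => /eqP e; apply: Hnu; rewrite {1}e; exact: m2.
- move=> a ha; apply: lesubK; rewrite opprB addrC subrK; exact: Hm.
Qed.

Lemma tail_disj (h d : F) (a : A) : vle 0 d -> vle (vmeet h (f a) + d) h ->
  vdisjoint (vpos (f a - h)) d.
Proof.
move=> d0 H; apply: disjC; apply: (disj_nn_le d0 (y := vpos (h - f a))).
  rewrite posB; apply: lesub; rewrite addrC //.
apply/disj_nn; [exact: pos_ge0|exact: pos_ge0|].
by rewrite -[f a - h]opprB pos_neg.
Qed.

Lemma ii_iii : cii -> forall h : F, vlt 0 h ->
      exists e : F, vlt 0 e /\ vle e h /\
        exists a0 : A, forall a, ds_le a0 a -> vdisjoint (vpos (f a - h)) e.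
Proof.
move=> Hii h [h0 hne].
have [a0 [d [d0 dh dne Hd]]] := extract Hii h0 (fun e => hne (esym e)).
exists d; split; first by split => // e; apply: dne; rewrite e.
split => //; exists a0 => a ha; exact: tail_disj d0 (Hd a ha).
Qed.

Lemma key_ub (h g e p : F) : vle 0 e -> vle 0 p -> vdisjoint e p ->
  vle (e - p) (h - g) -> vle (vmeet h g) (h - e).
Proof.
move=> e0 p0 hd H.
have : vle e (h - vmeet h g).
  rewrite -posB; move/(disj_nn e0 p0): hd => hd.
  have -> : e = vpos (e - p) by rewrite posB hd subr0.
  exact: pos_mono.
by move/lesubK => H2; apply: lesub; rewrite addrC.
Qed.

Lemma le_self_sub (h e : F) : vle h (h - e) -> vle e 0.
Proof.
move=> H; have := leDl (- h) H; rewrite addNr addKr => H2.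
by apply: leNK; rewrite oppr0.
Qed.

Lemma half (h : F) : (2^-1 : R) *: h + (2^-1 : R) *: h = h.
Proof.
rewrite -scalerDl; have -> : (2^-1 + 2^-1 : R) = 1 by lra.
by rewrite scale1r.
Qed.

Lemma half_pos (h : F) : vle 0 h -> vle 0 ((2^-1 : R) *: h).
Proof.
move=> h0; have := vl_le_scale (_ : 0 <= (2^-1 : R)) h0.
rewrite scaler0; apply; lra.
Qed.

Lemma half_nz (h : F) : h <> 0 -> (2^-1 : R) *: h <> 0.
Proof. by move=> hne e; apply: hne; rewrite -(half h) e addr0. Qed.

Lemma iii_ii : (forall h : F, vlt 0 h ->
      exists e : F, vlt 0 e /\ vle e h /\
        exists a0 : A, forall a, ds_le a0 a -> vdisjoint (vpos (f a - h)) e) -> cii.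
Proof.
move=> Hiii h h0 Hsup; apply: NNPP => hne.
set k := (2^-1 : R) *: h.
have k0 : vle 0 k := half_pos h0.
have [e [[e0 ene] [ek [a0 Hd]]]] := Hiii k (conj k0 (fun q => half_nz hne (esym q))).
have H : vle h (h - e).
  apply: (Hsup a0).2 => x [a [ha ->]].
  apply: (key_ub e0 (pos_ge0 (f a - k)) (disjC (Hd a ha))).
  rewrite -(half h) -addrA -/k; eapply leD; [exact: ek|].
  by rewrite -[k - f a]opprB; apply: leN; apply: le_pos.
have := le_self_sub H => e0'; apply: ene; exact: le_an e0 e0'.
Qed.


Lemma fa_abs (a : A) : vabs (f a - 0) = f a.
Proof. by rewrite subr0 abs_id. Qed.

Lemma i_ii : uo_conv f 0 -> cii.
Proof.
move=> Hi h h0 Hsup.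
have [G [[Glb Ggl] HG]] := Hi h h0.
apply: le_an => //; apply: Ggl => g Gg.
have [a0 Ha] := HG g Gg.
apply: (Hsup a0).2 => x [a [ha ->]].
have := (Ha a ha).2; rewrite fa_abs add0r meetC //.
Qed.

Lemma ii_i : archimedean F -> cii -> uo_conv f 0.
Proof.
move=> Harch Hii g g0.
pose G := fun u : F => exists a0, forall a, ds_le a0 a -> vle (vmeet (f a) g) u.
exists G; split; last first.
  move=> u [a0 Ha]; exists a0 => a ha; rewrite fa_abs; split.
    rewrite sub0r; apply: le_tr (meet_ge0 (Hpos a) g0).
    apply: leN0'; apply: le_tr (Ha a ha); exact: meet_ge0.
  by rewrite add0r; apply: Ha.
have G0 : forall u, G u -> vle 0 u.
  by move=> u [a0 Ha]; apply: le_tr (Ha a0 (ds_refl a0)); exact: meet_ge0.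
split => // w Hw.
set hh := vpos w.
have HhG : forall u, G u -> vle hh u.
  by move=> u Gu; apply: jl; [exact: Hw|exact: G0].
have Gg : G g.
  by case: (ds_inhabited A) => a1; exists a1 => a _; apply: m2.
have hhg : vle hh g := HhG g Gg.
suff : hh = 0 by move=> e; rewrite -e; exact: le_pos.
apply: Hii; first exact: pos_ge0.
move=> a0; split; first by move=> x [a [_ ->]]; apply: m1.
move=> v Hv.
set m := vmeet hh v; set dd := hh - m.
have dd0 : vle 0 dd by apply: subge0; apply: m1.
have claim : forall u, G u -> G (u - dd).
  move=> u [a1 Ha1].
  have [a2 [h02 h12]] := ds_up a0 a1.
  exists a2 => a ha.
  have ha0 := ds_trans h02 ha; have ha1 := ds_trans h12 ha.
  set X := vmeet (f a) g; set M := vmeet hh (f a).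
  have XU : vle X u := Ha1 a ha1.
  have Mm : vle M m by apply: mg; [exact: m1| apply: Hv; exists a].
  have MX : vle M X by apply: mg; [exact: m2| exact: le_tr (m1 _ _) hhg].
  set c := X - M.
  have c0 : vle 0 c := subge0 MX.
  have cle : vle c (vpos (f a - hh)).
    by rewrite posB meetC; apply: leDr; apply: m1.
  have ddle : vle dd (vpos (hh - f a)).
    by rewrite posB; apply: leDl; apply: leN.
  have cd0 : vmeet c dd = 0.
    apply: le_an; last exact: meet_ge0.
    apply: le_tr (meet_mono cle ddle) _.
    by rewrite -[hh - f a]opprB pos_neg; apply: le_rf.
  have eX : X = c + M by rewrite subrK.
  have eXd : X + dd = vjoin (c + M) (dd + M).
    have jcd : vjoin c dd = c + dd by rewrite -(join_meet c dd) cd0 addr0.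
    by rewrite -joinDr jcd eX addrAC.
  apply: lesub; rewrite eXd -eX; apply: jl => //.
  apply: le_tr (HhG u (ex_intro _ a1 Ha1)).
  by rewrite addrC; apply: lesubK; rewrite /dd opprB [hh + _]addrC subrK.
have ind : forall n u, G u -> vle (hh + dd *+ n) u.
  elim=> [|n IH] u Gu; first by rewrite mulr0n addr0; exact: HhG.
  by rewrite mulrSr addrA; apply: lesubK; apply: IH; apply: claim.
have dd00 : dd = 0.
  apply: (Harch dd g dd0 g0) => n; apply: le_tr (ind n g Gg).
  by rewrite addrC; apply: le_addr; exact: pos_ge0.
have : hh = m by move/eqP: dd00; rewrite subr_eq0 => /eqP.
by move=> ->; apply: m2.
Qed.

Lemma bp_spec (HP : PPP F) (e x : F) :
  band_gen e (band_proj e x) /\ disj_comp e (x - band_proj e x).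
Proof.
rewrite /band_proj; apply: (epsilon_spec (inhabits (0 : F))
   (fun y => band_gen e y /\ disj_comp e (x - y))).
case: (HP e x) => y [z [h1 [h2 ->]]]; exists y; split => //.
by rewrite [y + z]addrC addrK.
Qed.

Lemma iv_ii (HP : PPP F) : (forall h : F, vlt 0 h ->
      exists e : F, component e h /\ e <> 0 /\
        exists a0 : A, forall a, ds_le a0 a -> vle (band_proj e (f a)) e) -> cii.
Proof.
move=> Hiv h h0 Hsup; apply: NNPP => hne.
set k := (2^-1 : R) *: h.
have k0 : vle 0 k := half_pos h0.
have [e [hc [ene [a0 Hb]]]] := Hiv k (conj k0 (fun q => half_nz hne (esym q))).
have ekr : k = e + (k - e) by rewrite addrC subrK.
have e0 : vle 0 e := comp_nn k0 ekr hc.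
have r0 : vle 0 (k - e).
  by apply: (comp_nn k0 (e := k - e) (r := e)); [rewrite subrK|exact: disjC].
have ek : vle e k by rewrite {1}ekr; apply: le_addr.
have H : vle h (h - e).
  apply: (Hsup a0).2 => x [a [ha ->]].
  have [_ Hs] := bp_spec HP e (f a).
  set y := band_proj e (f a) in Hs *.
  have Hy : vle y e := Hb a ha.
  set s := f a - y in Hs.
  have sp : vdisjoint e (vpos s).
    apply: disjC; apply: (disj_le _ Hs).
    by rewrite (abs_id (pos_ge0 s)); apply: pos_le_abs.
  apply: (key_ub e0 (pos_ge0 s) sp).
  have ehy : vle e (h - y).
    rewrite -(half h) -/k -addrA; apply: (le_tr ek); apply: le_addr.
    by apply: subge0; exact: (le_tr Hy ek).
  have -> : h - f a = h - y - s by rewrite /s opprB addrA subrK.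
  by apply: leD ehy _; apply: leN; apply: le_pos.
have := le_self_sub H => e0'; apply: ene; exact: le_an e0' e0.
Qed.


Lemma ii_iv (HP : PPP F) : cii -> (forall h : F, vlt 0 h ->
      exists e : F, component e h /\ e <> 0 /\
        exists a0 : A, forall a, ds_le a0 a -> vle (band_proj e (f a)) e).
Proof.
move=> Hii h [h0 hne].
have [a0 [d [d0 dh dne Hd]]] := extract Hii h0 (fun e => hne (esym e)).
have [Hbg Hdc] := bp_spec HP d h.
set e := band_proj d h in Hbg Hdc *.
have her : vdisjoint e (h - e) := Hbg _ Hdc.
exists e; split => //.
have her' : h = e + (h - e) by rewrite addrC subrK.
have e0 : vle 0 e := comp_nn h0 her' her.
have r0 : vle 0 (h - e).
  by apply: (comp_nn h0 (e := h - e) (r := e)); [rewrite subrK|exact: disjC].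
split.
  move=> ez; apply: dne; apply: disj_self.
  apply: (disj_nn_le d0 dh); move: Hdc; by rewrite ez subr0.
have de : vle d e.
  have -> : d = vmeet h d by rewrite meetC meet_l.
  rewrite {1}her'; apply: (le_tr (subadd e0 r0 d0)).
  have -> : vmeet (h - e) d = 0 by apply/(disj_nn r0 d0).
  by rewrite addr0; apply: m1.
have Hsub : forall z, vdisjoint z e -> vdisjoint z d.
  by move=> z hz; apply: disjC; apply: (disj_nn_le d0 de); apply: disjC.
exists a0 => a ha.
have [Hyg Hyc] := bp_spec HP e (f a).
set y := band_proj e (f a) in Hyg Hyc *.
set s := f a - y in Hyc.
set z := vpos (y - e).
set w := vpos (f a - h) + vabs (h - e) + vabs s.
have w0 : vle 0 w.
  by apply: add_ge0; first apply: add_ge0; [exact: pos_ge0|exact: abs_ge0|exact: abs_ge0].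
have ye : (f a - h) + (h - e) - s = y - e.
  rewrite /s opprB !addrA subrK addrAC [f a - e - f a]addrAC subrr add0r addrC //.
have zw : vle z w.
  rewrite /z -(pos_id w0) -ye; apply: pos_mono; apply: leD; last exact: abs_geN.
  by apply: leD; [exact: le_pos|exact: abs_ge].
have wd : vdisjoint w d.
  apply: disjD; last exact: (disj_abs (Hsub s Hyc)).
  exact: (disjD (tail_disj d0 (Hd a ha)) (disj_abs Hdc)).
have zd : vdisjoint z d := disj_nn_le (pos_ge0 _) zw wd.
have ze : vdisjoint z e := disjC (Hbg z zd).
have yz : vdisjoint y z := Hyg z ze.
have z_le : vle z (vabs y + vabs e).
  have := abs_tri y (- e); rewrite absN; exact: (le_tr (pos_le_abs _)).
have zz : vdisjoint z z.
  exact: (disj_nn_le (pos_ge0 _) z_le (disjD (disj_abs yz) (disj_abs (disjC ze)))).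
have z0 : z = 0 := disj_self zz.
have := le_pos (y - e); rewrite -/z z0 => H.
by have := leDr e H; rewrite subrK add0r.
Qed.

End Main.

Theorem theorem6p2 (R : realType) (F : vector_lattice R) (A : directed_set)
  (f : A -> F) :
  archimedean F ->
  (forall a, vle 0 (f a)) ->
  let cond_i := uo_conv f 0 in
  let cond_ii := forall h : F, vle 0 h ->
      (forall a0 : A, is_sup (fun x => exists a, ds_le a0 a /\ x = vmeet h (f a)) h) ->
      h = 0 in
  let cond_iii := forall h : F, vlt 0 h ->
      exists e : F, vlt 0 e /\ vle e h /\
        exists a0 : A, forall a, ds_le a0 a -> vdisjoint (vpos (f a - h)) e in
  let cond_iv := forall h : F, vlt 0 h ->
      exists e : F, component e h /\ e <> 0 /\
        exists a0 : A, forall a, ds_le a0 a -> vle (band_proj e (f a)) e in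
  ((cond_i <-> cond_ii) /\ (cond_ii <-> cond_iii)) /\
  (PPP F -> (cond_i <-> cond_iv)).
Proof.
intros Harch Hpos; cbv zeta.
split; [split|].
- split; [exact: (i_ii Hpos) | exact: (ii_i Hpos Harch)].
- split; [exact: (ii_iii Hpos) | exact: iii_ii].
- move=> HP; split.
    by move=> Hi; apply: (ii_iv Hpos HP); apply: (i_ii Hpos).
  by move=> Hiv; apply: (ii_i Hpos Harch); apply: (iv_ii HP).
Qed.
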